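(* Let $R$ be a commutative Artinian ring and $M$ a non-zero $R$-module with two minimal PS-hollow representations $\sum_{i=1}^n N_i=M=\sum_{i=1}^n K_i$, where both $N_i$ and $K_i$ are $H_i$-PS-hollow for each $i\in\{1,\dots,n\}$. If $In(N)$ is PS-hollow whenever $N$ is a main PS-hollow submodule of $M$, then $N_i=K_i$ for all $i\in\{1,\dots,n\}$.
   Context: All rings are commutative with unity. An $R$-submodule $N\leq M$ is PS-hollow iff for every ideal $I\leq R$ and every submodule $L\leq M$: $N\subseteq IM+L$ implies $N\subseteq IM$ or $N\subseteq L$. For a PS-hollow $N\leq M$ put $A_N=\{I\leq R: N\subseteq IM\}$, $H_N$ the set of minimal elements of $A_N$, and $In(N)=\bigcap_{I\in H_N} IM$ ($=M$ if $H_N=\emptyset$). For a set $H$ of ideals, $N$ is $H$-PS-hollow iff $N$ is PS-hollow and $H_N=H$. A minimal PS-hollow representation of $M$ is an expression $M=\sum_{i=1}^n N_i$ with each $N_i$ $H_i$-PS-hollow, such that $In(N_1),\dots,In(N_n)$ are pairwise incomparable and $N_j\not\subseteq\sum_{i\neq j}N_i$ for every $j$. A main PS-hollow submodule of $M$ is a submodule occurring as a summand $N_i$ in some minimal PS-hollow representation of $M$. *)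

(* Defs.v *)
From HB Require Import structures.
From mathcomp Require Import all_boot all_order all_algebra.
From mathcomp Require Import boolp classical_sets.
Set Implicit Arguments. Unset Strict Implicit. Unset Printing Implicit Defensive.
Import GRing.Theory.
Local Open Scope ring_scope.
Local Open Scope classical_set_scope.

Section PSHollow.
Variables (R : comNzRingType) (M : lmodType R).

Definition is_ideal (I : set R) : Prop :=
  I 0 /\ (forall x y, I x -> I y -> I (x + y)) /\ (forall r x, I x -> I (r * x)).

Definition is_submod (N : set M) : Prop :=
  N 0 /\ (forall x y, N x -> N y -> N (x + y)) /\ (forall r x, N x -> N (r *: x)).

Definition artinian_ring : Prop :=
  forall I : nat -> set R, (forall k, is_ideal (I k)) ->
    (forall k, I k.+1 `<=` I k) -> exists k0, forall k, (k0 <= k)%N -> I k = I k0.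

(* IM = submodule generated by { a *: m | a in I, m in M } (finite sums) *)
Definition idmod (I : set R) : set M :=
  [set x | exists (k : nat) (a : 'I_k -> R) (m : 'I_k -> M),
             (forall i, I (a i)) /\ x = \sum_(i < k) a i *: m i].

Definition addsub (A B : set M) : set M := [set x | exists a b, A a /\ B b /\ x = a + b].

Definition sumsub (n : nat) (N : 'I_n -> set M) (P : pred 'I_n) : set M :=
  [set x | exists f : 'I_n -> M, (forall i, P i -> N i (f i)) /\ x = \sum_(i | P i) f i].

Definition PS_hollow (N : set M) : Prop :=
  is_submod N /\
  forall (I : set R) (L : set M), is_ideal I -> is_submod L ->
    N `<=` addsub (idmod I) L -> N `<=` idmod I \/ N `<=` L.

Definition A_of (N : set M) : set (set R) := [set I | is_ideal I /\ N `<=` idmod I].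

Definition H_of (N : set M) : set (set R) :=
  [set I | A_of N I /\ forall J, A_of N J -> J `<=` I -> J = I].

(* In(N) = intersection of IM over I in H_N (= M when H_N is empty) *)
Definition In_of (N : set M) : set M := \bigcap_(I in H_of N) idmod I.

Definition H_PS_hollow (H : set (set R)) (N : set M) : Prop :=
  PS_hollow N /\ H_of N = H.

Definition min_PS_rep (n : nat) (N : 'I_n -> set M) : Prop :=
  (forall i, exists H, H_PS_hollow H (N i)) /\
  sumsub N predT = setT /\
  (forall i j, i != j -> ~ (In_of (N i) `<=` In_of (N j))) /\
  (forall j, ~ (N j `<=` sumsub N (fun i => i != j))).

Definition main_PS_hollow (N : set M) : Prop :=
  exists (n : nat) (Ns : 'I_n -> set M) (i : 'I_n), min_PS_rep Ns /\ Ns i = N.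

End PSHollow.

(* Main.v *)
Require Import Defs.
From HB Require Import structures.
From mathcomp Require Import all_boot all_order all_algebra.
From mathcomp Require Import boolp classical_sets.
Set Implicit Arguments. Unset Strict Implicit. Unset Printing Implicit Defensive.
Import GRing.Theory.
Local Open Scope ring_scope.
Local Open Scope classical_set_scope.

Section Aux.
Variables (R : comNzRingType) (M : lmodType R).

Lemma idmod0 (I : set R) : @idmod R M I 0.
Proof. exists 0%N, (fun _ => 0), (fun _ => 0); split; first by case.
by rewrite big_ord0. Qed.

Lemma idmodD (I : set R) x y : @idmod R M I x -> idmod I y -> idmod I (x + y).
Proof.
move=> [k1 [a1 [m1 [Ha1 ->]]]] [k2 [a2 [m2 [Ha2 ->]]]].
pose p (i : 'I_(k1 + k2)) : R * M :=
  match split i with inl x => (a1 x, m1 x) | inr y => (a2 y, m2 y) end.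
exists (k1 + k2)%N, (fun i => (p i).1), (fun i => (p i).2); split.
  by move=> i; rewrite /p; case: (split i).
rewrite big_split_ord /=; congr (_ + _); apply: eq_bigr => i _; rewrite /p.
  by have -> : split (lshift k2 i) = inl i := unsplitK (inl i).
by have -> : split (rshift k1 i) = inr i := unsplitK (inr i).
Qed.

Lemma idmodZ (I : set R) r x : is_ideal I -> @idmod R M I x -> idmod I (r *: x).
Proof.
move=> [_ [_ HI]] [k [a [m [Ha ->]]]].
exists k, (fun i => r * a i), m; split; first by move=> i; apply: HI.
by rewrite scaler_sumr; apply: eq_bigr => i _; rewrite scalerA.
Qed.

Lemma art_min (hart : artinian_ring R) (S : set (set R)) :
  (forall J, S J -> is_ideal J) -> forall I0, S I0 ->
  exists J, S J /\ J `<=` I0 /\ forall J', S J' -> J' `<=` J -> J' = J.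
Proof.
move=> Sid I0 SI0; apply: contrapT => hno.
pose P J := S J /\ J `<=` I0.
have nx J : exists J', P J -> P J' /\ J' `<=` J /\ J' <> J.
  case: (pselect (P J)) => [[SJ JI]|nP]; last by exists J.
  case: (pselect (exists J', S J' /\ J' `<=` J /\ J' <> J)) => [[J' [SJ' [sub ne]]]|nE].
    by exists J' => _; split=> //; split=> // x /sub /JI.
  exfalso; apply: hno; exists J; split=> //; split=> // J' SJ' sub.
  by apply: contrapT => ne; apply: nE; exists J'.
have [nxt Hn] := choice nx.
pose c k := iter k nxt I0.
have Pc k : P (c k).
  elim: k => [|k IH]; first by split.
  by have [] := Hn _ IH.
have [k0 Hk0] := hart c (fun k => Sid _ (Pc k).1) (fun k => (Hn _ (Pc k)).2.1).
have := Hk0 k0.+1 (leqnSn k0).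
by have [_ [_]] := Hn _ (Pc k0).
Qed.

Lemma incl (hart : artinian_ring R) n (N K : 'I_n -> set M) (H : 'I_n -> set (set R))
  (hN : min_PS_rep N) (hK : min_PS_rep K)
  (hNH : forall i, H_PS_hollow (H i) (N i))
  (hKH : forall i, H_PS_hollow (H i) (K i)) j : K j `<=` N j.
Proof.
have HA i I : H i I -> is_ideal I /\ N i `<=` idmod I.
  by rewrite -(hNH i).2 => -[[]].
have key i : i != j -> exists I, H i I /\ ~ (K j `<=` idmod I).
  move=> ij; apply: contrapT => hno.
  have ji : j != i by rewrite eq_sym.
  apply: (hK.2.2.1 j i ji) => x Hx I HI.
  have HI' := HI; rewrite (hKH i).2 in HI'.
  have sub : K j `<=` idmod I.
    by apply: contrapT => ns; apply: hno; exists I.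
  have idI : is_ideal I by move: HI => [[]].
  have [J [AJ [JI minJ]]] := art_min hart (S := A_of (K j)) (fun J h => h.1) (conj idI sub).
  have HJ : H_of (K j) J by split=> // J' AJ' sub'; apply: minJ.
  have [k [a [m [Ha ->]]]] := Hx J HJ.
  by exists k, a, m; split=> // l; apply: JI.
have [Ich HIch] : {Ich : 'I_n -> set R & forall i, is_ideal (Ich i) /\ (i != j -> H i (Ich i) /\ ~ (K j `<=` idmod (Ich i)))}.
  apply: (@choice _ _ (fun i I => is_ideal I /\ (i != j -> H i I /\ ~ (K j `<=` idmod I)))) => i; have [->|ij] := eqVneq i j.
    exists setT; split; last by move/negP.
    by split=> //.
  have [I [HI nI]] := key i ij.
  exists I; split; first by have [] := HA i I HI.
  by move=> _.
have Nsub : is_submod (N j) by have [[]] := hNH j.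
pose L (t : seq 'I_n) : set M := [set x | exists y g, N j y /\
   (forall i, i \in t -> idmod (Ich i) (g i)) /\ x = y + \sum_(i <- t) g i].
have Lsub t : is_submod (L t).
  have [N0 [ND NZ]] := Nsub.
  split; [|split].
  - exists 0, (fun _ => 0); split=> //; split; first by move=> *; apply: idmod0.
    by rewrite big1 // addr0.
  - move=> x1 x2 [y1 [g1 [Ny1 [Hg1 ->]]]] [y2 [g2 [Ny2 [Hg2 ->]]]].
    exists (y1 + y2), (fun i => g1 i + g2 i); split; first exact: ND.
    split; first by move=> i it; apply: idmodD; [apply: Hg1|apply: Hg2].
    by rewrite big_split /= addrACA.
  - move=> r x [y [g [Ny [Hg ->]]]].
    exists (r *: y), (fun i => r *: g i); split; first exact: NZ.
    split; first by move=> i it; apply: idmodZ; [exact: (HIch i).1|apply: Hg].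
    by rewrite scalerDr scaler_sumr.
have step t : (forall i, i \in t -> ~ (K j `<=` idmod (Ich i))) -> K j `<=` L t -> K j `<=` N j.
  elim: t => [|i t IH] hb hL.
    by move=> x /hL [y [g [Ny [_ ->]]]]; rewrite big_nil addr0.
  have hb' : forall k, k \in t -> ~ (K j `<=` idmod (Ich k)).
    by move=> k kt; apply: hb; rewrite inE kt orbT.
  have hsub : K j `<=` addsub (idmod (Ich i)) (L t).
    move=> x /hL [y [g [Ny [Hg ->]]]].
    exists (g i), (y + \sum_(k <- t) g k); split; first by apply: Hg; rewrite inE eqxx.
    split; last by rewrite big_cons addrCA.
    exists y, g; split=> //; split=> // k kt; apply: Hg; by rewrite inE kt orbT.
  case: ((hKH j).1.2 (Ich i) (L t) (HIch i).1 (Lsub t) hsub) => h.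
    by exfalso; apply: (hb i (mem_head i t) h).
  exact: IH.
apply: (step [seq i <- index_enum 'I_n | i != j]).
  move=> i; rewrite mem_filter => /andP [ij _].
  by have [_ /(_ ij) []] := HIch i.
move=> x Kx.
have : sumsub N predT x by rewrite hN.2.1.
case=> f [Hf ->].
exists (f j), f; split; first exact: Hf.
split.
  move=> i; rewrite mem_filter => /andP [ij _].
  have [_ /(_ ij) [HI _]] := HIch i.
  by apply: (HA i _ HI).2; apply: Hf.
by rewrite (bigD1 j) //= big_filter.
Qed.

End Aux.

Unset Implicit Arguments.
Theorem corollary5p11 (R : comNzRingType) (M : lmodType R)
  (hart : artinian_ring R) (hM : exists x : M, x != 0)
  (n : nat) (N K : 'I_n -> set M) (H : 'I_n -> set (set R))
  (hN : min_PS_rep N) (hK : min_PS_rep K)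
  (hNH : forall i, H_PS_hollow (H i) (N i))
  (hKH : forall i, H_PS_hollow (H i) (K i))
  (hIn : forall L : set M, main_PS_hollow L -> PS_hollow (In_of L)) :
  forall i, N i = K i.
Proof.
move=> i; apply/seteqP; split.
  exact: (incl hart hK hN hKH hNH).
exact: (incl hart hN hK hNH hKH).
Qed.
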